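(* Assume the setting described in the context and suppose the event $\mathcal{E}$ holds. There is an absolute constant $C>0$ such that the following holds. Let $k'\ge k$ be an integer, let $\mathbf{w}\in\mathbb{R}^n$ be a unit vector with at most $k'$ nonzero entries, set $\alpha:=|\langle\mathbf{w},\mathbf{v}\rangle|$ and $\mathbf{y}:=\hat{\boldsymbol{\Gamma}}\mathbf{w}$ (so $\mathbf{y}=\theta\langle\mathbf{w},\mathbf{v}\rangle\mathbf{v}+\mathbf{W}\mathbf{w}$), and define $$ b:=C(1+\theta)\sqrt{\frac{k'\log n}{m}}. $$ Whenever $\theta\alpha>2b$, $$ \cos\angle\Big(\frac{\mathcal{H}_{k'}(\mathbf{y})}{\|\mathcal{H}_{k'}(\mathbf{y})\|_2},\mathbf{v}\Big)\ \ge\ \frac{\theta\alpha-2b}{\theta\alpha+b}\qquad\text{and}\qquad \sin\angle\Big(\frac{\mathcal{H}_{k'}(\mathbf{y})}{\|\mathcal{H}_{k'}(\mathbf{y})\|_2},\mathbf{v}\Big)\ \le\ \frac{5b}{\theta\alpha-2b}. $$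
   Context: Let $n\ge 2$, $m\ge1$, $\theta>0$, $k\in[n]$; $\mathbf{v}\in\mathbb{R}^n$ a unit vector with at most $k$ nonzero entries; $\mathbf{x}_1,\dots,\mathbf{x}_m$ i.i.d. $\mathcal{N}(\mathbf{0},\mathbf{I}_n+\theta\mathbf{v}\mathbf{v}^\top)$; $\hat{\boldsymbol{\Gamma}}=\frac1m\sum_i\mathbf{x}_i\mathbf{x}_i^\top-\mathbf{I}_n$; $\mathbf{W}=\hat{\boldsymbol{\Gamma}}-\theta\mathbf{v}\mathbf{v}^\top$. $\|\cdot\|_2$ is the Euclidean/spectral norm and $\mathbf{W}_{S,S}$ a principal submatrix. $\mathcal{H}_{k'}$ keeps the $k'$ largest-magnitude entries of a vector and zeroes the rest. For unit vectors, $\cos\angle(\mathbf{a},\mathbf{b})=|\langle\mathbf{a},\mathbf{b}\rangle|$ and $\sin\angle(\mathbf{a},\mathbf{b})=\sqrt{1-\langle\mathbf{a},\mathbf{b}\rangle^2}$. Fix an absolute constant $C_0>0$; $\mathcal{E}$ is the event that $\|\mathbf{W}_{S,S}\|_2\le C_0(1+\theta)\sqrt{|S|\log n/m}$ for all nonempty $S\subseteq[n]$. Absolute constants do not depend on $n,m,k,k',\theta,\mathbf{v},\mathbf{w}$. *)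

(* Defs.v *)
From HB Require Import structures.
From mathcomp Require Import all_boot all_order all_algebra.
From mathcomp Require Import boolp classical_sets reals exp.
Set Implicit Arguments. Unset Strict Implicit. Unset Printing Implicit Defensive.
Import Order.TTheory GRing.Theory Num.Theory.
Local Open Scope ring_scope.

Section Defs.
Variable R : realType.

Definition dotv (n : nat) (a b : 'cV[R]_n) : R := \sum_(i < n) a i 0 * b i 0.
Definition norm2 (n : nat) (a : 'cV[R]_n) : R := Num.sqrt (dotv a a).

Definition specnorm (p : nat) (A : 'M[R]_p) : R :=
  sup [set norm2 (A *m x) | x in [set x : 'cV[R]_p | norm2 x = 1]]%classic.

Definition principal_submx (n : nat) (A : 'M[R]_n) (S : {set 'I_n}) : 'M[R]_#|S| :=
  \matrix_(i < #|S|, j < #|S|) A (enum_val i) (enum_val j).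

Definition nnz (n : nat) (a : 'cV[R]_n) : nat := #|[set i | a i 0 != 0]|.

(* z is a valid output of H_{k'}(y): z keeps the entries of y on a set S of
   min(k', n) indices of largest magnitude (any tie-breaking) and zeroes the rest. *)
Definition is_hard_threshold (n k' : nat) (y z : 'cV[R]_n) : Prop :=
  exists S : {set 'I_n},
    [/\ #|S| = minn k' n,
        (forall i j, i \in S -> j \notin S -> `|y j 0| <= `|y i 0|)
      & forall i, z i 0 = if i \in S then y i 0 else 0].

Definition Gamma_hat (n m : nat) (x : 'I_m -> 'cV[R]_n) : 'M[R]_n :=
  (m%:R)^-1 *: (\sum_(i < m) x i *m (x i)^T) - 1%:M.

Definition Wnoise (n m : nat) (theta : R) (v : 'cV[R]_n) (x : 'I_m -> 'cV[R]_n)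
  : 'M[R]_n := Gamma_hat x - theta *: (v *m v^T).

Definition event_E (C0 : R) (n m : nat) (theta : R) (W : 'M[R]_n) : Prop :=
  forall S : {set 'I_n}, (0 < #|S|)%N ->
    specnorm (principal_submx W S)
      <= C0 * (1 + theta) * Num.sqrt (#|S|%:R * ln (n%:R) / m%:R).

(* angles between unit vectors *)
Definition cos_angle (n : nat) (a b : 'cV[R]_n) : R := `|dotv a b|.
Definition sin_angle (n : nat) (a b : 'cV[R]_n) : R := Num.sqrt (1 - dotv a b ^+ 2).

End Defs.

(* Main.v *)
Require Import Defs.
From HB Require Import structures.
From mathcomp Require Import all_boot all_order all_algebra.
From mathcomp Require Import boolp classical_sets reals exp.
From mathcomp Require Import ring lra zify.
From Stdlib Require Import Lia.
Import Order.TTheory GRing.Theory Num.Theory.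
Local Open Scope ring_scope.
Lemma dotvE (R : realType) n (a : 'cV[R]_n) : dotv a a = \sum_i a i 0 ^+ 2.
Proof. by apply: eq_bigr => i _; rewrite expr2. Qed.

Lemma dotv_ge0 (R : realType) n (a : 'cV[R]_n) : 0 <= dotv a a.
Proof. rewrite dotvE; apply: sumr_ge0 => i _; exact: sqr_ge0. Qed.

Lemma norm2_sq (R : realType) n (a : 'cV[R]_n) : norm2 a ^+ 2 = dotv a a.
Proof. by rewrite /norm2 sqr_sqrtr // dotv_ge0. Qed.

Lemma term_le_sum (R : realType) n (F : 'I_n -> R) j :
  (forall i, 0 <= F i) -> F j <= \sum_i F i.
Proof.
move=> F0; rewrite (bigD1 j) //= lerDl; apply: sumr_ge0 => i _; exact: F0.
Qed.

Lemma specnorm_ub (R : realType) p (A : 'M[R]_p) (x : 'cV[R]_p) :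
  norm2 x = 1 -> norm2 (A *m x) <= specnorm A.
Proof.
move=> hx; apply: sup_upper_bound; last by exists x.
split; first by exists (norm2 (A *m x)); exists x.
exists (Num.sqrt (\sum_i (\sum_j `|A i j|) ^+ 2)) => _ [y hy <-].
rewrite /norm2 ler_sqrt; last by apply: sumr_ge0 => i _; exact: sqr_ge0.
rewrite dotvE; apply: ler_sum => i _.
have hy1 : forall j, `|y j 0| <= 1.
  move=> j; have : y j 0 ^+ 2 <= 1.
    have := @norm2_sq _ _ y; rewrite hy expr1n dotvE => ->.
    by apply: (@term_le_sum _ _ (fun l => y l 0 ^+ 2)) => l; exact: sqr_ge0.
  by move=> h; rewrite -(@ler_pXn2r _ 2) ?nnegrE // expr1n real_normK ?num_real.
have hb : `|(A *m y) i 0| <= \sum_j `|A i j|.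
  rewrite mxE; apply: le_trans (ler_norm_sum _ _ _) _.
  apply: ler_sum => j _; rewrite normrM.
  by rewrite -{2}(mulr1 `|A i j|) ler_wpM2l.
rewrite -real_normK ?num_real // ler_pXn2r ?nnegrE //.
by apply: sumr_ge0.
Qed.

Lemma sum_subset (R : realType) n (X U : {set 'I_n}) (F : 'I_n -> R) :
  X \subset U -> (forall i, 0 <= F i) -> \sum_(i in X) F i <= \sum_(i in U) F i.
Proof.
move=> /fintype.subsetP XU F0; rewrite [X in X <= _]big_mkcond [X in _ <= X]big_mkcond.
apply: ler_sum => i _; case: ifP => iX; first by rewrite XU.
by case: ifP.
Qed.

Lemma noise_bound (R : realType) n (Wn : 'M[R]_n) (w : 'cV[R]_n) (X : {set 'I_n})
  (Bd : nat -> R) :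
  norm2 w = 1 ->
  (forall S : {set 'I_n}, (0 < #|S|)%N -> specnorm (principal_submx Wn S) <= Bd #|S|) ->
  \sum_(i in X) ((Wn *m w) i 0) ^+ 2 <= (Bd #|X :|: [set i | w i 0 != 0]|) ^+ 2.
Proof.
move=> hw hE.
set U := X :|: [set i | w i 0 != 0].
have wU : forall i, i \notin U -> w i 0 = 0.
  move=> i; rewrite !inE negb_or => /andP[_]; by rewrite negbK => /eqP.
have U0 : (0 < #|U|)%N.
  rewrite lt0n; apply/negP => /eqP/cards0_eq U0.
  move: hw; rewrite /norm2 dotvE big1 ?sqrtr0 => [/esym/eqP|i _].
    by rewrite oner_eq0.
  by rewrite wU ?U0 ?inE // expr0n.
pose xU : 'cV[R]_#|U| := \col_j w (enum_val j) 0.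
have hx : norm2 xU = 1.
  rewrite -hw /norm2 !dotvE; congr Num.sqrt.
  under eq_bigr do rewrite mxE.
  rewrite -(big_enum_val (fun i => w i 0 ^+ 2)) big_mkcond /=.
  apply: eq_bigr => i _; case: ifP => // /negbT /wU ->; by rewrite expr0n.
have hP : forall j, (principal_submx Wn U *m xU) j 0 = (Wn *m w) (enum_val j) 0.
  move=> j; rewrite !mxE.
  under eq_bigr do rewrite !mxE.
  rewrite -(big_enum_val (fun l => Wn (enum_val j) l * w l 0)) big_mkcond /=.
  apply: eq_bigr => i _; case: ifP => // /negbT /wU ->; by rewrite mulr0.
have := hE U U0; have := @specnorm_ub _ _ (principal_submx Wn U) _ hx.
move=> h1 h2.
have h3 : norm2 (principal_submx Wn U *m xU) ^+ 2 <= Bd #|U| ^+ 2.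
  rewrite ler_pXn2r ?nnegrE //; first exact: le_trans h1 h2.
  - by rewrite /norm2 sqrtr_ge0.
  - apply: le_trans h2; apply: le_trans h1; by rewrite /norm2 sqrtr_ge0.
apply: le_trans h3.
rewrite norm2_sq dotvE.
under [X in _ <= X]eq_bigr do rewrite hP.
rewrite -(big_enum_val (fun l => (Wn *m w) l 0 ^+ 2)).
apply: sum_subset.
  exact: finset.subsetUl.
move=> i; exact: sqr_ge0.
Qed.

Lemma sum_compare (R : realType) n (A B : {set 'I_n}) (f : 'I_n -> R) :
  (#|A| <= #|B|)%N -> (forall i, 0 <= f i) ->
  (forall i j, i \in B -> j \in A -> f j <= f i) ->
  \sum_(j in A) f j <= \sum_(i in B) f i.
Proof.
move=> AB f0 hf.
have SB : 0 <= \sum_(i in B) f i by apply: sumr_ge0.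
have [B0|Bp] := eqVneq #|B| 0%N.
  move: AB; rewrite B0 leqn0 => /eqP/cards0_eq ->.
  by rewrite big_set0.
have key : (\sum_(j in A) f j) *+ #|B| <= (\sum_(i in B) f i) *+ #|A|.
  rewrite -sumrMnl -sumr_const.
  apply: ler_sum => j jA; rewrite -sumr_const.
  by apply: ler_sum => i iB; apply: hf.
have key2 : (\sum_(i in B) f i) *+ #|A| <= (\sum_(i in B) f i) *+ #|B|.
  by rewrite -[_ *+ #|A|]mulr_natl -[_ *+ #|B|]mulr_natl ler_wpM2r // ler_nat.
have := le_trans key key2.
by rewrite lerMn2r (negbTE Bp).
Qed.

Lemma expand (R : realType) n (z v : 'cV[R]_n) (c : R) :
  \sum_i (z i 0 - c * v i 0) ^+ 2 = dotv z z - 2 * c * dotv z v + c ^+ 2 * dotv v v.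
Proof.
rewrite /dotv.
rewrite (eq_bigr (fun i => z i 0 * z i 0 - 2 * c * (z i 0 * v i 0) + c ^+ 2 * (v i 0 * v i 0))); last by move=> i _; ring.
by rewrite big_split /= sumrB -!mulr_sumr.
Qed.

Lemma dotv_scale (R : realType) n (z v : 'cV[R]_n) (c : R) :
  dotv (c *: z) v = c * dotv z v.
Proof.
rewrite /dotv mulr_sumr; apply: eq_bigr => i _; by rewrite mxE mulrA.
Qed.

Lemma dotvC (R : realType) n (z v : 'cV[R]_n) : dotv z v = dotv v z.
Proof. by apply: eq_bigr => i _; rewrite mulrC. Qed.
Lemma final_alg (R : realType) (N D a b : R) : 0 <= b -> 2 * b < `|a| -> D ^+ 2 <= N ->
  N - 2 * a * D + a ^+ 2 <= b ^+ 2 ->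
  (`|a| - 2 * b) / (`|a| + b) <= `|(Num.sqrt N)^-1 * D| /\
  Num.sqrt (1 - ((Num.sqrt N)^-1 * D) ^+ 2) <= 5 * b / (`|a| - 2 * b).
Proof.
move=> b0 ab DN Q.
have hDa : (D - a) ^+ 2 <= b ^+ 2 by lra.
have hDa' : `|D - a| <= b.
  by rewrite -(@ler_pXn2r _ 2) ?nnegrE ?normr_ge0 // real_normK ?num_real.
have hD1 : `|D| >= `|a| - b.
  have := lerB_dist a D; rewrite distrC; lra.
have hD2 : `|D| <= `|a| + b.
  have := ler_normD (D - a) a; rewrite subrK; lra.
have haD : a * D <= `|a| * `|D|.
  by rewrite -normrM real_ler_norm ?num_real.
set s := Num.sqrt N.
have N0 : 0 <= N by apply: le_trans DN; exact: sqr_ge0.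
have sN : s ^+ 2 = N by rewrite sqr_sqrtr.
have s0 : 0 <= s by exact: sqrtr_ge0.
have D2 : `|D| ^+ 2 = D ^+ 2 by rewrite real_normK ?num_real.
have A2 : `|a| ^+ 2 = a ^+ 2 by rewrite real_normK ?num_real.
have sup : s <= `|a| + b.
  rewrite -(@ler_pXn2r _ 2) ?nnegrE //; last lra.
  have h3 : `|a| * `|D| <= `|a| * (`|a| + b) by rewrite ler_pM2l //; lra.
  rewrite sN; nra.
have slo : `|a| - b <= s.
  rewrite -(@ler_pXn2r _ 2) ?nnegrE //; last lra.
  rewrite sN; apply: le_trans DN; rewrite -D2 ler_pXn2r ?nnegrE //; lra.
have spos : 0 < s by lra.
split.
  rewrite normrM ger0_norm ?invr_ge0 //.
  rewrite ler_pdivrMr; last lra.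
  have -> : s^-1 * `|D| * (`|a| + b) = (`|D| * (`|a| + b)) / s by ring.
  rewrite ler_pdivlMr //. nra.
rewrite -(ger0_norm (_ : 0 <= 5 * b / (`|a| - 2 * b))); last first.
  apply: divr_ge0; lra.
rewrite -sqrtr_sqr ler_sqrt; last exact: sqr_ge0.
rewrite exprMn exprVn sN expr_div_n.
have N1 : 0 < N by rewrite -sN exprn_gt0.
have -> : 1 - N^-1 * D ^+ 2 = (N - D ^+ 2) / N by field; exact: lt0r_neq0.
have c0 : 0 < `|a| - 2 * b by lra.
rewrite ler_pdivrMr // mulrAC ler_pdivlMr; last exact: exprn_gt0.
have h1 : N - D ^+ 2 <= b ^+ 2 by have := sqr_ge0 (D - a); lra.
have h2 : (`|a| - b) ^+ 2 <= N.
  rewrite -sN ler_pXn2r ?nnegrE //; lra.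
have h3 : (`|a| - 2 * b) ^+ 2 <= (`|a| - b) ^+ 2 by rewrite ler_pXn2r ?nnegrE //; lra.
have h4 : (N - D ^+ 2) * (`|a| - 2 * b) ^+ 2 <= b ^+ 2 * (`|a| - 2 * b) ^+ 2.
  by rewrite ler_pM2r // exprn_gt0.
have h5 : b ^+ 2 * (`|a| - 2 * b) ^+ 2 <= b ^+ 2 * N.
  apply: ler_wpM2l; [exact: sqr_ge0|lra].
have h6 : 0 <= b ^+ 2 * N by apply: mulr_ge0; [exact: sqr_ge0|lra].
rewrite exprMn; lra.
Qed.

Theorem proposition6 (R : realType) (C0 : R) (hC0 : 0 < C0) :
  exists C : R, 0 < C /\
  forall (n m k k' : nat) (theta : R) (v : 'cV[R]_n) (x : 'I_m -> 'cV[R]_n)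
         (w : 'cV[R]_n) (z : 'cV[R]_n),
    (2 <= n)%N -> (1 <= m)%N -> 0 < theta -> (1 <= k <= n)%N ->
    norm2 v = 1 -> (nnz v <= k)%N ->
    @event_E R C0 n m theta (Wnoise theta v x) ->
    (k <= k')%N -> norm2 w = 1 -> (nnz w <= k')%N ->
    let alpha := `|dotv w v| in
    let y := Gamma_hat x *m w in
    let b := C * (1 + theta) * Num.sqrt (k'%:R * ln (n%:R) / m%:R) in
    is_hard_threshold k' y z ->
    theta * alpha > 2 * b ->
    let u := (norm2 z)^-1 *: z in
    (theta * alpha - 2 * b) / (theta * alpha + b) <= cos_angle u v /\
    sin_angle u v <= 5 * b / (theta * alpha - 2 * b).
Proof.
exists (4 * C0); split; first lra.
move=> n m k k' theta v x w z n2 m1 th0 /andP[k1 kn] hv hnv hE kk' hw hnw.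
move=> alpha y b [S [cS hS hzS]] hab u.
set Wn := Wnoise theta v x.
set L := ln (n%:R : R).
have L0 : 0 <= L by apply: ln_ge0; rewrite ler1n; lia.
have m0 : 0 < (m%:R : R) by rewrite ltr0n; lia.
set K := C0 ^+ 2 * (1 + theta) ^+ 2 * (k'%:R * L / m%:R).
have K0 : 0 <= K.
  apply: mulr_ge0; first by apply: mulr_ge0; apply: sqr_ge0.
  apply: divr_ge0; [apply: mulr_ge0 => //|lra].
set a := theta * dotv w v.
have hy : forall i, y i 0 = (Wn *m w) i 0 + a * v i 0.
  move=> i; rewrite /y /a.
  have -> : Gamma_hat x = Wn + theta *: (v *m v^T) by rewrite /Wn /Wnoise subrK.
  rewrite mulmxDl mxE; congr (_ + _).
  rewrite mxE /dotv mulrAC mulr_sumr; apply: eq_bigr => j _.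
  rewrite !mxE big_ord1 !mxE; ring.
have hnoise : forall X : {set 'I_n}, (#|X| <= k')%N ->
    \sum_(i in X) ((Wn *m w) i 0) ^+ 2 <= 2 * K.
  move=> X hX.
  apply: le_trans (@noise_bound _ _ Wn w X (fun s => C0 * (1 + theta) * Num.sqrt (s%:R * L / m%:R)) hw _) _.
    by move=> S0 S00; apply: hE.
  rewrite !exprMn sqr_sqrtr; last by apply: divr_ge0; [apply: mulr_ge0|lra].
  set Sw := [set i | w i 0 != 0].
  have hU := leq_card_setU X Sw.
  have hU' : (#|X :|: Sw| <= 2 * k')%N.
    have hSw : (#|Sw| <= k')%N by exact: hnw.
    move: hU => [hU _]; apply: (leq_trans hU); rewrite mul2n -addnn leq_add //.
  have hA : #|X :|: Sw|%:R * L / m%:R <= 2 * (k'%:R * L / m%:R).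
    rewrite !mulrA; apply: ler_wpM2r; first by rewrite invr_ge0; lra.
    apply: ler_wpM2r => //.
    by rewrite -natrM ler_nat.
  have hP : 0 <= C0 ^+ 2 * (1 + theta) ^+ 2 by apply: mulr_ge0; apply: sqr_ge0.
  rewrite /K; nra.
set r := fun i => (Wn *m w) i 0.
set V := [set i | v i 0 != 0].
set A := V :\: S.
set B := S :\: V.
have cS' : (#|S| <= k')%N by rewrite cS geq_minl.
have cV : (#|V| <= k)%N := hnv.
have cVn : (#|V| <= n)%N by rewrite -[X in (_ <= X)%N]card_ord max_card.
have cB : (#|B| <= #|S|)%N by apply: subset_leq_card; apply: subsetDl.
have cA : (#|A| <= #|V|)%N by apply: subset_leq_card; apply: subsetDl.
have cAB : (#|A| <= #|B|)%N.
  have h1 := cardsID S V; have h2 := cardsID V S.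
  rewrite finset.setIC in h2.
  have : (#|V| <= #|S|)%N by rewrite cS leq_min (leq_trans cV kk') (leq_trans cV kn).
  by rewrite /A /B -{1}h1 -h2 leq_add2l.
have hQ : \sum_i (z i 0 - a * v i 0) ^+ 2 =
    \sum_(i in S) r i ^+ 2 + \sum_(i in A) (a * v i 0) ^+ 2.
  rewrite [\sum_(i in S) _]big_mkcond [\sum_(i in A) _]big_mkcond -big_split.
  apply: eq_bigr => i _; rewrite hzS /A !inE.
  case iS: (i \in S) => /=.
    by rewrite hy addrK addr0.
  case: eqP => [->|_] /=; first by rewrite !mulr0 subr0 expr0n add0r.
  by rewrite !add0r sqrrN.
have hAv : \sum_(i in A) (a * v i 0) ^+ 2 <=
    2 * \sum_(i in A) y i 0 ^+ 2 + 2 * \sum_(i in A) r i ^+ 2.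
  rewrite !mulr_sumr -big_split /=; apply: ler_sum => i _.
  have -> : a * v i 0 = y i 0 - r i by rewrite hy /r addrAC subrr add0r.
  have := sqr_ge0 (y i 0 + r i); nra.
have hAB : \sum_(i in A) y i 0 ^+ 2 <= \sum_(i in B) y i 0 ^+ 2.
  apply: sum_compare => //; first by move=> i; exact: sqr_ge0.
  move=> i j; rewrite /A /B !inE => /andP[_ iS] /andP[jS _].
  have := hS i j iS jS => hij.
  rewrite -[y j 0 ^+ 2]real_normK ?num_real // -[y i 0 ^+ 2]real_normK ?num_real //.
  by rewrite ler_pXn2r ?nnegrE.
have hBr : \sum_(i in B) y i 0 ^+ 2 = \sum_(i in B) r i ^+ 2.
  apply: eq_bigr => i; rewrite /B !inE negbK => /andP[/eqP v0 _].
  by rewrite hy v0 mulr0 addr0.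
have nS := hnoise S cS'.
have nA := hnoise A (leq_trans cA (leq_trans cV kk')).
have nB := hnoise B (leq_trans cB cS').
have hvv : dotv v v = 1 by rewrite -norm2_sq hv expr1n.
have hQb : dotv z z - 2 * a * dotv z v + a ^+ 2 <= b ^+ 2.
  have := @expand _ _ z v a; rewrite hvv mulr1 => <-; rewrite hQ.
  have -> : b ^+ 2 = 16 * K.
    rewrite /b /K !exprMn sqr_sqrtr; last by apply: divr_ge0; [apply: mulr_ge0|lra].
    rewrite /L; ring.
  rewrite /r in nS nA nB hBr hAv; lra.
have hCS : dotv z v ^+ 2 <= dotv z z.
  have := @expand _ _ z v (dotv z v); rewrite hvv mulr1 => hE'.
  have : 0 <= \sum_i (z i 0 - dotv z v * v i 0) ^+ 2.
    by apply: sumr_ge0 => i _; exact: sqr_ge0.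
  rewrite hE'; lra.
have b0 : 0 <= b.
  rewrite /b; apply: mulr_ge0; last exact: sqrtr_ge0.
  apply: mulr_ge0; lra.
have ha : theta * alpha = `|a| by rewrite /a /alpha normrM gtr0_norm.
rewrite ha in hab *.
have [h1 h2] := @final_alg _ _ _ _ _ b0 hab hCS hQb.
rewrite /cos_angle /sin_angle /u dotv_scale.
by split.
Qed.
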